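(* Let $\alpha>0$ and let $P$ be a probability measure on $\mathbb{S}^{d-1}\times\mathbb{R}^d$ belonging to $\mathcal{M}_\alpha$, and let $P^*$ be its adjoint measure. Then: (i) $P^*$ is a probability measure and the marginal distributions induced by $P$ and $P^*$ on $\mathbb{S}^{d-1}$ coincide; (ii) for every measurable $f:\mathbb{S}^{d-1}\times(\mathbb{R}^d\setminus\{0\})\to\mathbb{R}$, $$\int_{\mathbb{S}^{d-1}\times(\mathbb{R}^d\setminus\{0\})}f(s^*,m^* )\,P^*(ds^*,dm^* )=\int_{\mathbb{S}^{d-1}\times(\mathbb{R}^d\setminus\{0\})}f(m/\|m\|,s/\|m\|)\,\|m\|^\alpha\,P(ds,dm),$$ in the sense that if one integral exists then so does the other and they are equal; (iii) $P^*\in\mathcal{M}_\alpha$; (iv) $(P^* )^*=P$.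
   Context: $\|\cdot\|$ is the Euclidean norm and $\mathbb{S}^{d-1}$ the unit sphere in $\mathbb{R}^d$. $\mathcal{M}_\alpha$ is the set of probability measures $P$ on $\mathbb{S}^{d-1}\times\mathbb{R}^d$ such that $\int_{\mathbb{S}^{d-1}\times(\mathbb{R}^d\setminus\{0\})}\mathbf{1}_S(m/\|m\|)\|m\|^\alpha P(ds,dm)\le P(S\times\mathbb{R}^d)$ for every Borel $S\subset\mathbb{S}^{d-1}$. For $P\in\mathcal{M}_\alpha$, the adjoint $P^*$ is the (a priori signed) Borel measure on $\mathbb{S}^{d-1}\times\mathbb{R}^d$ defined by $P^*(S\times\{0\})=P(S\times\mathbb{R}^d)-\int_{\mathbb{S}^{d-1}\times(\mathbb{R}^d\setminus\{0\})}\mathbf{1}_S(m/\|m\|)\|m\|^\alpha P(ds,dm)$ for Borel $S\subset\mathbb{S}^{d-1}$, and $P^*(E)=\int_{\mathbb{S}^{d-1}\times(\mathbb{R}^d\setminus\{0\})}\mathbf{1}_E(m/\|m\|,s/\|m\|)\|m\|^\alpha P(ds,dm)$ for Borel $E\subset\mathbb{S}^{d-1}\times(\mathbb{R}^d\setminus\{0\})$. *)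

(* Defs.v *)
From HB Require Import structures.
From mathcomp Require Import all_boot all_order all_algebra.
From mathcomp Require Import all_classical all_reals all_analysis.
Unset Printing Implicit Defensive.
Import Order.TTheory GRing.Theory Num.Theory.
Import numFieldNormedType.Exports.
Local Open Scope classical_set_scope.
Local Open Scope ring_scope.

(* R^d, carried by row vectors 'rV[R]_d, equipped with its Borel
   sigma-algebra (generated by the open sets of the usual topology). *)
Definition Rd (R : realType) (d : nat) : Type :=
  g_sigma_algebraType (@open 'rV[R]_d).

(* the ambient space R^d x R^d with the product sigma-algebra;
   the paper's space S^{d-1} x R^d is the measurable subset [sphere `*` setT] *)
Definition Rd2 (R : realType) (d : nat) : Type := (Rd R d * Rd R d)%type.

Definition enorm (R : realType) (d : nat) (v : 'rV[R]_d) : R :=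
  Num.sqrt (\sum_(i < d) (v ord0 i) ^+ 2).
Arguments enorm {R d}.

Definition sphere (R : realType) (d : nat) : set (Rd R d) :=
  [set v | enorm (v : 'rV[R]_d) = 1].

Definition nonzero (R : realType) (d : nat) : set (Rd R d) :=
  [set v | (v : 'rV[R]_d) != 0].

Definition Dom (R : realType) (d : nat) : set (Rd2 R d) :=
  sphere R d `*` nonzero R d.

Definition swapmap (R : realType) (d : nat) (x : Rd2 R d) : Rd2 R d :=
  (((enorm (x.2 : 'rV[R]_d))^-1 *: (x.2 : 'rV[R]_d) : Rd R d),
   ((enorm (x.2 : 'rV[R]_d))^-1 *: (x.1 : 'rV[R]_d) : Rd R d)).
Arguments swapmap {R d}.

Definition weight (R : realType) (d : nat) (alpha : R) (x : Rd2 R d) : R :=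
  (enorm (x.2 : 'rV[R]_d)) `^ alpha.
Arguments weight {R d}.

(* membership in M_alpha (P is a probability measure on S^{d-1} x R^d,
   i.e. a probability on R^d x R^d giving full mass to S^{d-1} x R^d) *)
Definition in_M (R : realType) (d : nat) (alpha : R)
    (P : probability (Rd2 R d) R) : Prop :=
  P (~` (sphere R d `*` setT)) = 0%E /\
  forall S : set (Rd R d), measurable S -> S `<=` sphere R d ->
    (\int[P]_(x in Dom R d)
        ((\1_S ((swapmap x).1) : R) * weight alpha x)%:E
      <= P (S `*` setT))%E.

(* the adjoint set function P^*: a Borel set A of S^{d-1} x R^d is split into
   A \cap (S^{d-1} x {0}) = S_A x {0} and A \cap (S^{d-1} x (R^d\{0})) *)
Definition adjoint (R : realType) (d : nat) (alpha : R)
    (P : probability (Rd2 R d) R) (A : set (Rd2 R d)) : \bar R :=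
  let SA := [set s | sphere R d s /\ A (s, (0 : 'rV[R]_d) : Rd R d)] in
  (P (SA `*` setT)
   - \int[P]_(x in Dom R d) ((\1_SA ((swapmap x).1) : R) * weight alpha x)%:E
   + \int[P]_(x in Dom R d)
        ((\1_(A `&` Dom R d) (swapmap x) : R) * weight alpha x)%:E)%E.

Definition integral_exists (dT : measure_display) (T : measurableType dT)
    (R : realType) (mu : {measure set T -> \bar R}) (D : set T) (f : T -> R) :=
  ((\int[mu]_(x in D) (EFin \o f)^\+ x < +oo) \/
   (\int[mu]_(x in D) (EFin \o f)^\- x < +oo))%E.
Arguments in_M {R d}.
Arguments adjoint {R d}.
Arguments integral_exists {dT T R}.

(* Main.v *)
Require Import Defs.
From HB Require Import structures.
From mathcomp Require Import all_boot all_order all_algebra.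
From mathcomp Require Import all_classical all_reals all_analysis.
From mathcomp Require Import lra measurable_realfun.
Import Order.TTheory GRing.Theory Num.Theory.
Import numFieldNormedType.Exports.
Local Open Scope classical_set_scope.
Local Open Scope ring_scope.

Lemma mproj (R : realType) d (i : 'I_d) :
  measurable_fun [set: Rd R d] (fun v : Rd R d => (v : 'rV[R]_d) ord0 i).
Proof.
apply: (measurability _ (measurable_realfun.RGenOpens.measurableE R)).
move=> _ [_ [a [b ->]] <-]; rewrite setTI.
apply: sub_sigma_algebra.
have /continuousP := @coord_continuous R 1 d ord0 i; apply.
exact: interval_open.
Qed.

Definition rbox (R : realType) d (p : 'rV[rat]_d * 'rV[rat]_d) : set 'rV[R]_d :=
  [set v | forall i, ratr (p.1 ord0 i) < v ord0 i < ratr (p.2 ord0 i)].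

Lemma measurable_rV dT (T : measurableType dT) (R : realType) d (f : T -> Rd R d) :
  (forall i, measurable_fun [set: T] (fun x => (f x : 'rV[R]_d) ord0 i)) ->
  measurable_fun [set: T] f.
Proof.
move=> mf.
apply: (@measurability _ _ T (Rd R d) setT f (@open (matrix R 1 d)) erefl).
move=> _ [U oU <-]; rewrite setTI.
have -> : f @^-1` U = \bigcup_(p : 'rV[rat]_d * 'rV[rat]_d)
   (f @^-1` (@rbox R d p) `&` [set _ | @rbox R d p `<=` U]).
  apply/seteqP; split => [x Ux|x [p _ [bx bU]]]; last exact: bU.
  have : nbhs (f x : 'rV[R]_d) U by apply: open_nbhs_nbhs; split.
  move=> /nbhs_ballP[e e0 eU].
  have : forall i : 'I_d, exists q : rat * rat,
      (f x : 'rV[R]_d) ord0 i - e < ratr q.1 < (f x : 'rV[R]_d) ord0 i /\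
      (f x : 'rV[R]_d) ord0 i < ratr q.2 < (f x : 'rV[R]_d) ord0 i + e.
    move=> i.
    have [q1 q1i] : exists q, ratr q \in `]((f x : 'rV[R]_d) ord0 i - e), ((f x : 'rV[R]_d) ord0 i)[.
      by apply: rat_in_itvoo; rewrite ltrBlDr ltrDl.
    have [q2 q2i] : exists q, ratr q \in `]((f x : 'rV[R]_d) ord0 i), ((f x : 'rV[R]_d) ord0 i + e)[.
      by apply: rat_in_itvoo; rewrite ltrDl.
    by exists (q1, q2); move: q1i q2i; rewrite !in_itv /=; move=> -> ->.
  move=> /fin_all_exists[q qP].
  exists (\row_i (q i).1, \row_i (q i).2) => //; split.
    by move=> i /=; rewrite !mxE; have [/andP[_ ->] /andP[-> _]] := qP i.
  move=> v vb; apply: eU; split => // i j; rewrite (ord1 i).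
  have [/andP[h1 h2] /andP[h3 h4]] := qP j.
  have /andP[h5 h6] := vb j; rewrite /= !mxE in h5 h6.
  rewrite /ball /= ltr_norml; apply/andP; split; lra.
apply: countable_bigcupT_measurable; first exact: countableP.
move=> p.
have -> : f @^-1` (@rbox R d p) =
    \bigcap_(i in [set: 'I_d]) ((fun x => (f x : 'rV[R]_d) ord0 i) @^-1`
       `](ratr (p.1 ord0 i) : R), ratr (p.2 ord0 i)[).
  apply/seteqP; split => [x bx i _|x bx i]; first by rewrite /= in_itv /=; exact: bx.
  by have := bx i Logic.I; rewrite /= in_itv.
have [bU|bU] := pselect (@rbox R d p `<=` U).
  rewrite [X in _ `&` X](_ : _ = setT); last by apply/seteqP; split.
  rewrite setIT; apply: fin_bigcap_measurable => // i _.
  by rewrite -[X in measurable X]setTI; apply: mf.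
rewrite [X in _ `&` X](_ : _ = set0) ?setI0//.
by apply/seteqP; split => // x.
Qed.

Section enorm_facts.
Context (R : realType) (d : nat).
Implicit Types v : 'rV[R]_d.

Lemma enorm_ge0 v : 0 <= enorm v.
Proof. exact: sqrtr_ge0. Qed.

Lemma enormZ (c : R) v : enorm (c *: v) = `|c| * enorm v.
Proof.
rewrite /enorm (eq_bigr (fun i => c ^+ 2 * v ord0 i ^+ 2)); last first.
  by move=> i _; rewrite mxE exprMn.
by rewrite -mulr_sumr sqrtrM ?sqr_ge0// sqrtr_sqr.
Qed.

Lemma enorm_eq0 v : (enorm v == 0) = (v == 0).
Proof.
apply/idP/idP => [|/eqP ->]; last first.
  by rewrite /enorm big1 ?sqrtr0// => i _; rewrite mxE expr0n.
rewrite sqrtr_eq0 => h; apply/eqP/rowP => i; rewrite mxE.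
have h0 : \sum_(j < d) v ord0 j ^+ 2 = 0.
  by apply/eqP; rewrite eq_le h sumr_ge0// => j _; rewrite sqr_ge0.
move/eqP: h0; rewrite psumr_eq0 => [/allP/(_ i)|j _]; last by rewrite sqr_ge0.
by rewrite mem_index_enum /= sqrf_eq0 => /(_ isT)/eqP.
Qed.

End enorm_facts.

Section meas.
Context (R : realType) (d : nat).

Lemma m_enorm : measurable_fun [set: Rd R d] (fun v : Rd R d => enorm (v : 'rV[R]_d)).
Proof.
have ms := measurable_realfun.continuous_measurable_fun (@sqrt_continuous R).
apply: (measurableT_comp ms).
apply: measurable_sum => i; apply: measurable_realfun.measurable_funX; exact: mproj.
Qed.

Lemma m_inorm : measurable_fun [set: Rd R d] (fun v : Rd R d => (enorm (v : 'rV[R]_d))^-1).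
Proof.
rewrite (_ : (fun v : Rd R d => _) = (fun v : Rd R d => (enorm (v : 'rV[R]_d)) `^ (-1))).
  exact: measurableT_comp (measurable_powR _) m_enorm.
by apply/funext => v; rewrite powR_inv1// enorm_ge0.
Qed.

Lemma m_sphere : measurable (sphere R d).
Proof.
rewrite (_ : sphere R d = (fun v : Rd R d => enorm (v : 'rV[R]_d)) @^-1` [set 1]) //.
by rewrite -[X in measurable X]setTI; apply: m_enorm.
Qed.

Lemma m_nonzero : measurable (nonzero R d).
Proof.
rewrite (_ : nonzero R d = (fun v : Rd R d => enorm (v : 'rV[R]_d)) @^-1` (~` [set 0])).
  by rewrite -[X in measurable X]setTI; apply: m_enorm => //; exact: measurableC.
by apply/seteqP; split => v /=; rewrite /nonzero /= -enorm_eq0 => /eqP.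
Qed.

Lemma m_Dom : measurable (Dom R d).
Proof. exact: measurableX m_sphere m_nonzero. Qed.

Lemma m_swapmap : measurable_fun [set: Rd2 R d] (@swapmap R d).
Proof.
apply/measurable_fun_pairP; split; apply: measurable_rV => i.
  rewrite (_ : (fun x => _) = (fun x : Rd2 R d => (enorm (x.2 : 'rV[R]_d))^-1 * (x.2 : 'rV[R]_d) ord0 i)); last first.
    by apply/funext => x; rewrite /swapmap /= mxE.
  apply: measurable_funM; first exact: measurableT_comp m_inorm measurable_snd.
  exact: measurableT_comp (mproj _ _ i) measurable_snd.
rewrite (_ : (fun x => _) = (fun x : Rd2 R d => (enorm (x.2 : 'rV[R]_d))^-1 * (x.1 : 'rV[R]_d) ord0 i)); last first.
  by apply/funext => x; rewrite /swapmap /= mxE.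
apply: measurable_funM; first exact: measurableT_comp m_inorm measurable_snd.
exact: measurableT_comp (mproj _ _ i) measurable_fst.
Qed.

Lemma m_weight (alpha : R) : measurable_fun [set: Rd2 R d] (weight alpha).
Proof.
exact: measurableT_comp (measurable_powR _) (measurableT_comp m_enorm measurable_snd).
Qed.

End meas.

Definition dens dT (T : measurableType dT) (R : realType)
  (mu : set T -> \bar R) (h : T -> R) (A : set T) : \bar R :=
  (\int[mu]_(x in A) (h x)%:E)%E.
Arguments dens {dT T R}.

Section density.
Local Open Scope ereal_scope.
Context dT (T : measurableType dT) (R : realType) (mu : {measure set T -> \bar R}).
Variable h : T -> R.
Hypotheses (mh : measurable_fun setT h) (h0 : forall x, (0 <= h x)%R).

Lemma dens0 : dens mu h set0 = 0.
Proof. by rewrite /dens integral_set0. Qed.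

Lemma dens_ge0 A : 0 <= dens mu h A.
Proof. by apply: integral_ge0 => x _; rewrite lee_fin. Qed.

Lemma dens_sigma_additive : semi_sigma_additive (dens mu h).
Proof.
apply: semi_sigma_additive_nng_induced => //.
exact/measurable_EFinP.
Qed.

HB.instance Definition _ := isMeasure.Build _ _ _ (dens mu h)
  dens0 dens_ge0 dens_sigma_additive.

Lemma densE A : measurable A -> dens mu h A = \int[mu]_x (\1_A x * h x)%:E.
Proof.
move=> mA; rewrite /dens integral_mkcond; apply: eq_integral => x _.
by rewrite /patch indicE; case: ifPn => xA; rewrite ?mul1r ?mul0r.
Qed.

Import HBNNSimple.

Lemma ge0_integral_dens (f : T -> \bar R) :
  measurable_fun setT f -> (forall x, 0 <= f x) ->
  \int[dens mu h]_x f x = \int[mu]_x (f x * (h x)%:E).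
Proof.
move=> mf f0; pose f_ := nnsfun_approx measurableT mf.
transitivity (limn (fun n => \int[dens mu h]_x (f_ n x)%:E)).
  rewrite -monotone_convergence//=.
  - apply: eq_integral => x _; apply/esym/cvg_lim => //=.
    exact: cvg_nnsfun_approx.
  - by move=> n; apply: measurableT_comp => //.
  - by move=> n x _; rewrite lee_fin.
  - by move=> x _ a b ab; rewrite lee_fin//; exact/lefP/nd_nnsfun_approx.
transitivity (limn (fun n => \int[mu]_x ((f_ n x)%:E * (h x)%:E))); last first.
  rewrite -monotone_convergence//=.
  - apply: eq_integral => x _; apply/cvg_lim => //=.
    apply: cvgeZr => //.
    exact: cvg_nnsfun_approx.
  - move=> n; apply/measurable_EFinP => /=.
    by apply: measurable_funM => //.
  - by move=> n x _; rewrite mule_ge0// lee_fin.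
  - move=> x _ a b ab; rewrite lee_wpmul2r// ?lee_fin//.
    exact/lefP/nd_nnsfun_approx.
congr (limn _); apply/funext => n.
under [LHS]eq_integral do rewrite fimfunE -fsumEFin//.
rewrite ge0_integral_fsum//; last 2 first.
- by move=> r; exact/measurable_EFinP/measurable_funM.
- by move=> r x _; rewrite nnfun_muleindic_ge0.
under [RHS]eq_integral do rewrite -EFinM fimfunE mulr_fsuml -fsumEFin//.
rewrite ge0_integral_fsum//; last 2 first.
- move=> r; apply/measurable_EFinP/measurable_funM => //.
  exact/measurable_funM.
- by move=> r x _; rewrite lee_fin mulr_ge0//; have := nnfun_muleindic_ge0 (f_ n) r x; rewrite -EFinM lee_fin.
apply: eq_fsbigr => r /set_mem [t _ <-].
rewrite integralZl_indic_nnsfun// integral_indic//= setIT.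
under eq_integral do rewrite -mulrA EFinM.
rewrite ge0_integralZl_EFin//.
- by rewrite densE//; exact: measurable_sfunP.
- by move=> x _; rewrite lee_fin mulr_ge0.
apply/measurable_EFinP/measurable_funM => //.
Qed.

End density.

Lemma push_ssa d d' (T1 : measurableType d) (T2 : measurableType d')
  (R : realType) (m : {measure set T1 -> \bar R}) (f : T1 -> T2) :
  measurable_fun [set: T1] f -> semi_sigma_additive (pushforward m f).
Proof.
move=> mf F mF tF mUF; rewrite /pushforward preimage_bigcup.
apply: measure_semi_sigma_additive.
- by move=> n; rewrite -[X in measurable X]setTI; exact: mf.
- apply/trivIsetP => /= i j _ _ ij; rewrite -preimage_setI.
  by move/trivIsetP : tF => /(_ _ _ _ _ ij) ->//; rewrite preimage_set0.
- by rewrite -preimage_bigcup -[X in measurable X]setTI; exact: mf.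
Qed.

Lemma push_ge0 d d' (T1 : measurableType d) (T2 : measurableType d')
  (R : realType) (m : {measure set T1 -> \bar R}) (f : T1 -> T2) A :
  measurable_fun [set: T1] f -> (0 <= pushforward m f A)%E.
Proof. by move=> mf; exact: measure_ge0. Qed.

Definition mdiff d (T : measurableType d) (R : realType)
  (m1 m2 : set T -> \bar R) (A : set T) : \bar R :=
  maxe (m1 A - m2 A)%E 0%E.
Arguments mdiff {d T R}.

Section mdiff.
Local Open Scope ereal_scope.
Context d (T : measurableType d) (R : realType).
Variables m1 m2 : {measure set T -> \bar R}.
Hypothesis le21 : forall A, measurable A -> m2 A <= m1 A.
Hypothesis fin1 : m1 setT < +oo.

Lemma fin_m1 A : measurable A -> m1 A \is a fin_num.
Proof.
move=> mA; rewrite ge0_fin_numE//; apply: le_lt_trans fin1.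
by apply: le_measure; rewrite ?inE//.
Qed.

Lemma fin_m2 A : measurable A -> m2 A \is a fin_num.
Proof.
move=> mA; have h1 := fin_m1 _ mA.
rewrite ge0_fin_numE//; apply: (le_lt_trans (le21 _ mA)).
by rewrite -ge0_fin_numE.
Qed.

Lemma mdiffE A : measurable A -> mdiff m1 m2 A = m1 A - m2 A.
Proof.
move=> mA; rewrite /mdiff; apply: max_l.
by rewrite sube_ge0 ?le21// fin_m1 ?orbT.
Qed.

Lemma mdiff0 : mdiff m1 m2 set0 = 0.
Proof. by rewrite mdiffE// !measure0 sube0. Qed.

Lemma mdiff_ge0 A : 0 <= mdiff m1 m2 A.
Proof. by rewrite /mdiff le_max lexx orbT. Qed.

Lemma mdiff_ssa : semi_sigma_additive (mdiff m1 m2).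
Proof.
move=> F mF tF mUF; rewrite mdiffE//.
have -> : (fun n => \sum_(0 <= i < n) mdiff m1 m2 (F i)) =
   (fun n => \sum_(0 <= i < n) m1 (F i)) \- (fun n => \sum_(0 <= i < n) m2 (F i)).
  apply/funext => n /=; rewrite -fin_num_sumeN; last by move=> i _; exact: fin_m2.
  by rewrite -big_split /=; apply: eq_bigr => i _; rewrite mdiffE.
apply: cvgeB.
- by rewrite fin_num_adde_defl// fin_numN fin_m2.
- exact: measure_semi_sigma_additive.
- exact: measure_semi_sigma_additive.
Qed.

End mdiff.
Arguments push_ge0 {d d' T1 T2 R} m {f} A.
Arguments push_ssa {d d' T1 T2 R} m {f}.

Section geom.
Context {R : realType} {d : nat} (alpha : R).
Local Notation D := (Dom R d).
Local Notation sw := (@swapmap R d).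
Local Notation w := (@weight R d alpha).

Lemma w_ge0 x : 0 <= w x.
Proof. exact: powR_ge0. Qed.

Lemma enorm2_gt0 {x : Rd2 R d} : D x -> 0 < enorm (x.2 : 'rV[R]_d).
Proof.
move=> [_ /= h]; rewrite lt_def enorm_ge0 andbT enorm_eq0.
exact: h.
Qed.

Lemma sw1 {x : Rd2 R d} : D x -> enorm ((sw x).1 : 'rV[R]_d) = 1.
Proof.
move=> Dx; have h := enorm2_gt0 Dx.
rewrite /swapmap /= enormZ ger0_norm ?invr_ge0 ?enorm_ge0// mulVf//.
by rewrite gt_eqF.
Qed.

Lemma sw2 {x : Rd2 R d} : D x ->
  enorm ((sw x).2 : 'rV[R]_d) = (enorm (x.2 : 'rV[R]_d))^-1.
Proof.
move=> Dx; have h := enorm2_gt0 Dx; case: Dx => /= s1 _.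
by rewrite /swapmap /= enormZ ger0_norm ?invr_ge0 ?enorm_ge0// s1 mulr1.
Qed.

Lemma sw_D {x : Rd2 R d} : D x -> D (sw x).
Proof.
move=> Dx; split; first exact: sw1.
rewrite /nonzero /= -enorm_eq0 -/((sw x).2) sw2// invr_eq0.
by rewrite gt_eqF// enorm2_gt0.
Qed.

Lemma swK {x : Rd2 R d} : D x -> sw (sw x) = x.
Proof.
move=> Dx; have h := enorm2_gt0 Dx.
rewrite {1}/swapmap -/((sw x).2) sw2// invrK.
case: x Dx h => s m Dx h /=.
by rewrite /swapmap /= !scalerA mulfV ?gt_eqF// !scale1r.
Qed.

Lemma wsw {x : Rd2 R d} : D x -> w (sw x) * w x = 1.
Proof.
move=> Dx; have h := enorm2_gt0 Dx.
rewrite /weight sw2// -powRM ?invr_ge0 ?enorm_ge0// mulVf ?gt_eqF//.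
by rewrite powR1.
Qed.

End geom.

Section main.
Context (R : realType) (d : nat) (alpha : R) (P : probability (Rd2 R d) R).
Hypothesis HM : in_M alpha P.
Local Notation T := (Rd2 R d).
Local Notation D := (Dom R d).
Local Notation sw := (@swapmap R d).
Local Notation w := (@weight R d alpha).

Definition jmap (x : T) : T := (x.1, (0 : 'rV[R]_d) : Rd R d).
Definition kmap (x : T) : T := ((sw x).1, (0 : 'rV[R]_d) : Rd R d).
Definition secm (s : Rd R d) : T := (s, (0 : 'rV[R]_d) : Rd R d).
Definition hw (x : T) : R := \1_D x * w x.

Lemma m_jmap : measurable_fun [set: T] jmap.
Proof. exact: measurable_fun_pair measurable_fst (measurable_cst _). Qed.

Lemma m_kmap : measurable_fun [set: T] kmap.
Proof.
apply: measurable_fun_pair (measurable_cst _).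
exact: measurableT_comp measurable_fst (@m_swapmap R d).
Qed.

Lemma m_secm : measurable_fun [set: Rd R d] secm.
Proof. by apply: (@measurable_fun_pair _ _ _ _ _ _ id (fun=> (0 : 'rV[R]_d) : Rd R d)). Qed.

Lemma m_hw : measurable_fun [set: T] hw.
Proof.
apply: measurable_funM; first exact: measurable_indic (@m_Dom R d).
exact: m_weight.
Qed.

Lemma hw_ge0 x : 0 <= hw x.
Proof. by rewrite /hw mulr_ge0 ?w_ge0. Qed.

Lemma m_sphT : measurable (sphere R d `*` [set: Rd R d]).
Proof. exact: measurableX (@m_sphere R d) measurableT. Qed.

Definition W := dens P hw.
HB.instance Definition _ := isMeasure.Build _ _ _ W
  (dens0 _ _ _ P hw) (dens_ge0 _ _ _ P hw hw_ge0) (dens_sigma_additive _ _ _ P hw m_hw hw_ge0).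

Definition Q1 := pushforward W sw.
Lemma Q1_0 : Q1 set0 = 0%E.
Proof. by rewrite /Q1 /pushforward preimage_set0 measure0. Qed.
HB.instance Definition _ := isMeasure.Build _ _ _ Q1
  Q1_0 (fun A => push_ge0 W A (@m_swapmap R d)) (push_ssa W (@m_swapmap R d)).

Definition M1 := pushforward (mrestr P m_sphT) jmap.
Lemma M1_0 : M1 set0 = 0%E.
Proof. by rewrite /M1 /pushforward preimage_set0 measure0. Qed.
HB.instance Definition _ := isMeasure.Build _ _ _ M1
  M1_0 (fun A => push_ge0 (mrestr P m_sphT) A m_jmap) (push_ssa (mrestr P m_sphT) m_jmap).

Definition M2 := pushforward W kmap.
Lemma M2_0 : M2 set0 = 0%E.
Proof. by rewrite /M2 /pushforward preimage_set0 measure0. Qed.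
HB.instance Definition _ := isMeasure.Build _ _ _ M2
  M2_0 (fun A => push_ge0 W A m_kmap) (push_ssa W m_kmap).


Lemma int_D (f : T -> R) : (\int[P]_(x in D) (f x)%:E = \int[P]_x (\1_D x * f x)%:E)%E.
Proof.
rewrite integral_mkcond; apply: eq_integral => x _.
by rewrite /patch indicE; case: ifPn => xD; rewrite ?mul1r ?mul0r.
Qed.

Lemma W_E A : measurable A -> (W A = \int[P]_(x in D) (\1_A x * w x)%:E)%E.
Proof.
move=> mA; rewrite /W densE// int_D; apply: eq_integral => x _.
by rewrite /hw mulrCA.
Qed.

Lemma Q1E A : measurable A ->
  (Q1 A = \int[P]_(x in D) ((\1_(A `&` D) (sw x) : R) * w x)%:E)%E.
Proof.
move=> mA; rewrite /Q1 /pushforward W_E; last first.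
  by rewrite -[X in measurable X]setTI; exact: m_swapmap.
apply: eq_integral => x /[!inE] Dx; rewrite !indicE.
by rewrite in_setI [sw x \in D]mem_set ?andbT//; exact: sw_D.
Qed.

Definition SA (A : set T) := [set s | sphere R d s /\ A (s, (0 : 'rV[R]_d) : Rd R d)].

Lemma SA_meas A : measurable A -> measurable (SA A).
Proof.
move=> mA; rewrite (_ : SA A = sphere R d `&` secm @^-1` A) //.
apply: measurableI; first exact: m_sphere.
by rewrite -[X in measurable X]setTI; exact: m_secm.
Qed.

Lemma SA_sub A : SA A `<=` sphere R d.
Proof. by move=> s []. Qed.

Lemma M1E A : measurable A -> M1 A = P (SA A `*` setT).
Proof.
move=> mA; rewrite /M1 /pushforward /mrestr; congr (P _).
by apply/seteqP; split => -[s m] /=; rewrite /jmap /=; [move=> [? [? _]]|move=> [[? ?] _]].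
Qed.

Lemma M2E A : measurable A ->
  (M2 A = \int[P]_(x in D) ((\1_(SA A) ((sw x).1) : R) * w x)%:E)%E.
Proof.
move=> mA; rewrite /M2 /pushforward W_E; last first.
  by rewrite -[X in measurable X]setTI; exact: m_kmap.
apply: eq_integral => x /[!inE] Dx; rewrite !indicE.
suff -> : (x \in kmap @^-1` A) = ((sw x).1 \in SA A) by [].
apply/idP/idP => /set_mem h; apply/mem_set.
  by split => //; case: (sw_D Dx).
by case: h.
Qed.

Lemma le21 A : measurable A -> (M2 A <= M1 A)%E.
Proof.
move=> mA; rewrite M2E// M1E//; apply: HM.2; [exact: SA_meas|exact: SA_sub].
Qed.

Lemma fin1 : (M1 setT < +oo)%E.
Proof.
rewrite M1E//; apply: (@le_lt_trans _ _ 1%E); last exact: ltry.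
by apply: probability_le1; apply: measurableX => //; exact: SA_meas.
Qed.

Definition Q0 := mdiff M1 M2.
HB.instance Definition _ := isMeasure.Build _ _ _ Q0
  (@mdiff0 _ _ _ M1 M2 le21 fin1) (@mdiff_ge0 _ _ _ M1 M2)
  (@mdiff_ssa _ _ _ M1 M2 le21 fin1).

Local Notation Qr := (measure_add Q0 Q1).
Definition Q := mnormalize Qr P.


Local Notation X := (sphere R d `*` [set: Rd R d]).

Lemma Q0E A : measurable A -> Q0 A = (M1 A - M2 A)%E.
Proof. exact: (@mdiffE _ _ _ M1 M2 le21 fin1). Qed.

Lemma M2fin A : measurable A -> M2 A \is a fin_num.
Proof. exact: (@fin_m2 _ _ _ M1 M2 le21 fin1). Qed.

Lemma QrE A : Qr A = (Q0 A + Q1 A)%E.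
Proof. exact: measure_addE. Qed.

Lemma SA_X S : S `<=` sphere R d -> SA (S `*` setT) = S.
Proof. by move=> Ss; apply/seteqP; split => [s [_ []]//|s Ss']; split => //; exact: Ss. Qed.

Lemma Q1_M2 S : measurable S -> S `<=` sphere R d -> Q1 (S `*` setT) = M2 (S `*` setT).
Proof.
move=> mS Ss; have mST : measurable (S `*` [set: Rd R d]) by exact: measurableX.
rewrite Q1E// M2E// SA_X//; apply: eq_integral => x /[!inE] Dx; rewrite !indicE.
suff -> : (sw x \in (S `*` setT) `&` D) = ((sw x).1 \in S) by [].
rewrite in_setI [sw x \in D]mem_set ?andbT; last exact: sw_D.
by apply/idP/idP => /set_mem h; apply/mem_set => //; case: h.
Qed.

Lemma Qr_marg S : measurable S -> S `<=` sphere R d -> Qr (S `*` setT) = P (S `*` setT).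
Proof.
move=> mS Ss; have mST : measurable (S `*` [set: Rd R d]) by exact: measurableX.
by rewrite QrE Q0E// Q1_M2// subeK ?M2fin// M1E// SA_X.
Qed.

Lemma Qr_compl : Qr (~` X) = 0%E.
Proof.
have mX : measurable (~` X) by apply: measurableC; exact: m_sphT.
have h1 : SA (~` X) = set0.
  by apply/seteqP; split => // s [sS /=]; apply; split.
have h2 : (~` X) `&` D = set0.
  by apply/seteqP; split => // -[s m] [/= nX [sS _]]; apply: nX.
rewrite QrE Q0E// M1E// M2E// Q1E// h1 h2 set0X measure0.
under eq_integral do rewrite indic0 mul0r.
by rewrite integral0 sube0 add0e.
Qed.

Lemma P_X : P X = 1%E.
Proof.
have mX : measurable X := m_sphT.
rewrite -(probability_setT P) -[in RHS](setUv X) measureU//.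
- have h : P (~` X) = 0%E := HM.1.
  transitivity (P X + 0)%E; first by rewrite adde0.
  by congr (_ + _)%E; exact: (esym h).
- exact: measurableC.
- exact: setICr.
Qed.

Lemma Qr_setT : Qr setT = 1%E.
Proof.
have mX : measurable X := m_sphT.
transitivity (Qr (X `|` ~` X)); first by rewrite setUv.
have -> : Qr (X `|` ~` X) = (Qr X + Qr (~` X))%E.
  by apply: measureU => //; [exact: measurableC|exact: setICr].
by rewrite Qr_compl adde0 Qr_marg ?P_X//; exact: m_sphere.
Qed.

Lemma QE A : Q A = Qr A.
Proof.
rewrite /Q /mnormalize; set e := (X in (X == 0)%E || _).
set e' := (X in _ || (X == +oo)%E).
have -> : e = 1%E by exact: Qr_setT.
have -> : e' = 1%E by exact: Qr_setT.
rewrite onee_eq0 /=; set e'' := (X in fine X).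
have -> : e'' = 1%E by exact: Qr_setT.
by rewrite /= invr1 mule1.
Qed.

Lemma Q_D A : measurable A -> A `<=` D -> Q A = Q1 A.
Proof.
move=> mA AD.
have h1 : SA A = set0.
  apply/seteqP; split => // s [_ /AD [_ /=]].
  by rewrite /nonzero /= eqxx.
rewrite QE QrE Q0E// M1E// M2E// h1 set0X measure0.
under eq_integral do rewrite indic0 mul0r.
by rewrite integral0 sube0 add0e.
Qed.

Lemma ge0_int_Q (g : T -> \bar R) : measurable_fun D g -> (forall x, D x -> 0 <= g x)%E ->
  (\int[Q]_(x in D) g x = \int[P]_(x in D) (g (sw x) * (w x)%:E))%E.
Proof.
move=> mg g0.
have mD : measurable D := @m_Dom R d.
rewrite (eq_measure_integral Q1); last by move=> A mA AD; exact: Q_D.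
have mgD : measurable_fun setT (g \_ D) by apply/(measurable_restrictT _ _).1.
rewrite integral_mkcond /Q1 (ge0_integral_pushforward (@m_swapmap R d))//; last first.
  by move=> y _; exact: erestrict_ge0.
rewrite preimage_setT /W (@ge0_integral_dens _ _ _ P hw m_hw hw_ge0); last 2 first.
- by apply: measurableT_comp => //; exact: m_swapmap.
- by move=> x; exact: erestrict_ge0.
rewrite [RHS]integral_mkcond; apply: eq_integral => x _ /=.
rewrite /patch /hw indicE.
have [xD|xD] := boolP (x \in D).
  by rewrite (mem_set (sw_D (set_mem xD))) mul1r.
by rewrite mul0r mule0.
Qed.


Lemma m_ind1 S : measurable S ->
  measurable_fun [set: T] (fun x => ((\1_S ((sw x).1) : R) * w x)).
Proof.
move=> mS; apply: measurable_funM; last exact: m_weight.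
apply: measurableT_comp; first exact: measurable_indic.
exact: measurableT_comp measurable_fst (@m_swapmap R d).
Qed.

Lemma int_ind1 S : measurable S -> S `<=` sphere R d ->
  (\int[Q]_(x in D) ((\1_S ((sw x).1) : R) * w x)%:E = P ((S `*` setT) `&` D))%E.
Proof.
move=> mS Ss.
have mST : measurable (S `*` [set: Rd R d]) by exact: measurableX.
rewrite ge0_int_Q; last 2 first.
- by apply/measurable_EFinP/measurable_funTS; exact: m_ind1.
- by move=> x _; rewrite lee_fin mulr_ge0 ?w_ge0.
rewrite -integral_indic//; last exact: m_Dom.
apply: eq_integral => x /[!inE] Dx.
rewrite -EFinM -mulrA wsw// mulr1 swK//; congr (_%:E).
rewrite !indicE; suff -> : (x \in S `*` [set: Rd R d]) = (x.1 \in S) by [].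
apply/idP/idP => /set_mem h; apply/mem_set; first by case: h.
by split.
Qed.

Lemma int_ind2 A : measurable A ->
  (\int[Q]_(x in D) ((\1_(A `&` D) (sw x) : R) * w x)%:E = P (A `&` D))%E.
Proof.
move=> mA; have mD : measurable D := @m_Dom R d.
rewrite ge0_int_Q; last 2 first.
- apply/measurable_EFinP/measurable_funTS; apply: measurable_funM; last exact: m_weight.
  apply: measurableT_comp; first exact/measurable_indic/measurableI.
  exact: m_swapmap.
- by move=> x _; rewrite lee_fin mulr_ge0 ?w_ge0.
have -> : P (A `&` D) = (\int[P]_(x in D) (\1_(A `&` D) x)%:E)%E.
  by rewrite integral_indic//; [rewrite -setIA setIid|exact: measurableI].
apply: eq_integral => x /[!inE] Dx.
by rewrite -EFinM -mulrA wsw// mulr1 swK.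
Qed.

Lemma posM (a r : R) : 0 <= r -> maxe ((a * r)%:E) 0%E = (maxe a%:E 0%E * r%:E)%E.
Proof.
move=> r0; have [a0|a0] := leP 0 a.
  by rewrite !max_l ?lee_fin ?mulr_ge0// EFinM.
rewrite !max_r ?mul0e// lee_fin; first exact: ltW.
by rewrite mulr_le0_ge0// ltW.
Qed.

Lemma Pdecomp A : measurable A ->
  P A = (P ((SA A `*` setT) `\` D) + P (A `&` D))%E.
Proof.
move=> mA; have mD : measurable D := @m_Dom R d.
have mX : measurable X := m_sphT.
have -> : (SA A `*` setT) `\` D = (A `&` X) `\` D.
  apply/seteqP; split => -[s m] /=.
    move=> [[[sS Asm] _] nD]; have m0 : m = 0.
      by apply/eqP; apply: contra_notT nD => m0; split.
    by rewrite m0 in nD *; do ?split.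
  move=> [[Asm [sS _]] nD]; have m0 : m = 0.
    by apply/eqP; apply: contra_notT nD => m0; split.
  by rewrite m0 in Asm nD *; do ?split.
have -> : A `&` D = (A `&` X) `&` D.
  by rewrite -setIA; congr (_ `&` _); apply/seteqP; split => [x Dx|x []]; [split => //; case: Dx|].
rewrite -measureDI; last 2 first.
- exact: measurableI.
- exact: mD.
rewrite (measureDI P mA mX).
have h0 : P (A `\` X) = 0%E.
  apply/eqP; rewrite eq_le measure_ge0 andbT.
  have <- : P (~` X) = 0%E := HM.1.
  apply: le_measure; rewrite ?inE.
  all: try exact: measurableD.
  all: try exact: measurableC.
  by move=> x [_ ?].
transitivity (0 + P (A `&` X))%E; last exact: add0e.
by congr (_ + _)%E; exact: h0.
Qed.

Definition Qp : probability T R := Q.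

Lemma main_sec :
  exists Q : probability (Rd2 R d) R,
    (forall A : set (Rd2 R d), measurable A -> Q A = adjoint alpha P A) /\
    Q (~` (sphere R d `*` setT)) = 0%E /\
    (forall S : set (Rd R d), measurable S -> S `<=` sphere R d ->
       Q (S `*` setT) = P (S `*` setT)) /\
    (forall f : Rd2 R d -> R, measurable_fun (Dom R d) f ->
       let g := fun x : Rd2 R d => f (swapmap x) * weight alpha x in
       ((integral_exists Q (Dom R d) f <-> integral_exists P (Dom R d) g) /\
       (integral_exists Q (Dom R d) f ->
          (\int[Q]_(x in Dom R d) (f x)%:E
           = \int[P]_(x in Dom R d) (g x)%:E)%E))) /\
    in_M alpha Q /\
    (forall A : set (Rd2 R d), measurable A -> adjoint alpha Q A = P A).
Proof.
have mD : measurable D := @m_Dom R d.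
exists Qp.
split.
  move=> A mA; change (Q A = adjoint alpha P A).
  by rewrite QE QrE Q0E// M1E// M2E// Q1E//.
split.
  by change (Q (~` X) = 0%E); rewrite QE Qr_compl.
split.
  move=> S mS Ss; change (Q (S `*` [set: Rd R d]) = P (S `*` [set: Rd R d])).
  by rewrite QE Qr_marg.
split.
  move=> f mf g.
  have mfE : measurable_fun D (EFin \o f) by apply/measurable_EFinP.
  have hp : (\int[Q]_(x in D) (EFin \o f)^\+ x = \int[P]_(x in D) (EFin \o g)^\+ x)%E.
    rewrite ge0_int_Q; last 2 first.
    - exact: measurable_funepos.
    - by move=> x _; exact: funepos_ge0.
    by apply: eq_integral => x _; rewrite !funeposE /g /= posM ?w_ge0.
  have hn : (\int[Q]_(x in D) (EFin \o f)^\- x = \int[P]_(x in D) (EFin \o g)^\- x)%E.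
    rewrite ge0_int_Q; last 2 first.
    - exact: measurable_funeneg.
    - by move=> x _; exact: funeneg_ge0.
    apply: eq_integral => x _; by rewrite !funenegE /g /= -mulNr posM ?w_ge0.
  change (((\int[Q]_(x in D) (EFin \o f)^\+ x < +oo) \/
           (\int[Q]_(x in D) (EFin \o f)^\- x < +oo) <-> integral_exists P D g) /\
          (((\int[Q]_(x in D) (EFin \o f)^\+ x < +oo) \/
           (\int[Q]_(x in D) (EFin \o f)^\- x < +oo)) ->
           \int[Q]_(x in D) (f x)%:E = \int[P]_(x in D) (g x)%:E))%E.
  rewrite hp hn; split => // _.
  transitivity (\int[Q]_(x in D) (EFin \o f) x)%E; first by [].
  by rewrite integralE hp hn -integralE.
split.
  rewrite /in_M.
  change (Q (~` X) = 0%E /\ forall S : set (Rd R d), measurable S -> S `<=` sphere R d ->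
    (\int[Q]_(x in D) ((\1_S ((sw x).1) : R) * w x)%:E <= Q (S `*` [set: Rd R d]))%E).
  split; first by rewrite QE Qr_compl.
  move=> S mS Ss; rewrite int_ind1// QE Qr_marg//.
  by apply: measureIl => //; exact: measurableX.
move=> A mA.
change (Q (SA A `*` [set: Rd R d])
   - \int[Q]_(x in D) ((\1_(SA A) ((sw x).1) : R) * w x)%:E
   + \int[Q]_(x in D) ((\1_(A `&` D) (sw x) : R) * w x)%:E = P A)%E.
have mSA := SA_meas _ mA.
have mSAT : measurable (SA A `*` [set: Rd R d]) by exact: measurableX.
rewrite QE Qr_marg ?int_ind1 ?int_ind2 ?(Pdecomp _ mA) ?measureD//; last 2 first.
- exact: SA_sub.
- exact: SA_sub.
apply: (@le_lt_trans _ _ 1%E); last exact: ltry.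
exact: probability_le1.
Qed.

End main.

Theorem lemma4p3 (R : realType) (d : nat) (alpha : R)
    (P : probability (Rd2 R d) R) :
  0 < alpha -> in_M alpha P ->
  exists Q : probability (Rd2 R d) R,
    (forall A : set (Rd2 R d), measurable A -> Q A = adjoint alpha P A) /\
    Q (~` (sphere R d `*` setT)) = 0%E /\
    (forall S : set (Rd R d), measurable S -> S `<=` sphere R d ->
       Q (S `*` setT) = P (S `*` setT)) /\
    (forall f : Rd2 R d -> R, measurable_fun (Dom R d) f ->
       let g := fun x : Rd2 R d => f (swapmap x) * weight alpha x in
       ((integral_exists Q (Dom R d) f <-> integral_exists P (Dom R d) g) /\
       (integral_exists Q (Dom R d) f ->
          (\int[Q]_(x in Dom R d) (f x)%:E
           = \int[P]_(x in Dom R d) (g x)%:E)%E))) /\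
    in_M alpha Q /\
    (forall A : set (Rd2 R d), measurable A -> adjoint alpha Q A = P A).
Proof. by move=> _ HM; exact: main_sec. Qed.
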